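(* Let $(\varphi_\alpha)_{\alpha>0}$ be a non-linear regularizing filter satisfying Assumption B. Let $z\in\operatorname{ran}(\mathbf{M}_\kappa)\cap\operatorname{ran}(\Phi_{\tilde\alpha,\kappa})$ for some $\tilde\alpha>0$. Let $\delta_k\to0$, $\alpha_k\to0$ be positive sequences for which there is a constant $C>0$ with $\delta_k^2\le C\alpha_k$ for all $k$, and let $z^k\in\ell^2(\Lambda)$ with $\|z-z^k\|_2\le\delta_k$. Then $\mathbf{M}_\kappa^+\circ\Phi_{\alpha_k,\kappa}(z^k)\rightharpoonup\mathbf{M}_\kappa^+z$ weakly as $k\to\infty$.
   Context: $\Lambda$ is an at most countable index set and $\kappa=(\kappa_\lambda)_{\lambda\in\Lambda}\in(0,\infty)^\Lambda$ with $\sup_\lambda\kappa_\lambda<\infty$. $\mathbf{M}_\kappa\colon\ell^2(\Lambda)\to\ell^2(\Lambda)$, $(x_\lambda)\mapsto(\kappa_\lambda x_\lambda)$; $\mathbf{M}_\kappa^+$ is its Moore–Penrose inverse, with domain $\operatorname{ran}(\mathbf{M}_\kappa)=\{(c_\lambda)\in\ell^2:(c_\lambda/\kappa_\lambda)\in\ell^2\}$ and $\mathbf{M}_\kappa^+((c_\lambda))=(c_\lambda/\kappa_\lambda)$. A non-linear regularizing filter is a family $(\varphi_\alpha)_{\alpha>0}$ of functions $\varphi_\alpha\colon(0,\infty)\times\mathbb{R}\to\mathbb{R}$ such that for all $\alpha,\kappa>0$: (F1) $\varphi_\alpha(\kappa,\cdot)$ is non-decreasing; (F2) $\varphi_\alpha(\kappa,\cdot)$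 is 1-Lipschitz; (F3) $\varphi_\alpha(\kappa,0)=0$; (F4) $\lim_{\alpha\to0}\varphi_\alpha(\kappa,c)=c$ for all $c\in\mathbb{R}$. $\Phi_{\alpha,\kappa}\colon\ell^2(\Lambda)\to\ell^2(\Lambda)$, $(c_\lambda)\mapsto(\varphi_\alpha(\kappa_\lambda,c_\lambda))_\lambda$. Assumption B: (B1) for all $\kappa>0$ and $x\in\mathbb{R}$, $(|\varphi_\alpha(\kappa,x)|)_{\alpha>0}$ is monotonically increasing as $\alpha\downarrow0$; (B2) there exist $d,e>0$ such that for all $\kappa,\alpha>0$, $x\in\mathbb{R}$: $|x|\le d\alpha/\kappa\Rightarrow|\varphi_\alpha(\kappa,x)|\le\frac{e\kappa}{\sqrt\alpha}|x|$. *)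

(* Defs.v *)
From HB Require Import structures.
From mathcomp Require Import all_boot all_order all_algebra.
From mathcomp Require Import all_classical all_reals all_analysis.
Set Implicit Arguments. Unset Strict Implicit. Unset Printing Implicit Defensive.
Import Order.TTheory GRing.Theory Num.Theory.
Import numFieldNormedType.Exports.
Local Open Scope classical_set_scope.
Local Open Scope ring_scope.

Section L2.
Variables (R : realType) (L : countType).

Definition l2 (x : L -> R) : Prop :=
  (\esum_(i in [set: L]) ((x i) ^+ 2)%:E < +oo)%E.

Definition l2norm (x : L -> R) : R :=
  Num.sqrt (fine (\esum_(i in [set: L]) ((x i) ^+ 2)%:E)).

(* l^2 inner product (absolutely convergent for x, y in l^2):
   sum of positive parts minus sum of negative parts of x_i y_i *)
Definition l2dot (x y : L -> R) : R :=
  fine (\esum_(i in [set: L]) ((fun j => (x j * y j)%:E)^\+ i))%E -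
  fine (\esum_(i in [set: L]) ((fun j => (x j * y j)%:E)^\- i))%E.

Definition l2_weak_cvg (u : nat -> L -> R) (x : L -> R) : Prop :=
  forall y, l2 y -> (fun k => l2dot (u k) y) @ \oo --> l2dot x y.

(* M_kappa and its Moore-Penrose inverse (on its domain ran M_kappa) *)
Definition Mk (kap : L -> R) (x : L -> R) : L -> R := fun l => kap l * x l.
Definition Mplus (kap : L -> R) (c : L -> R) : L -> R := fun l => c l / kap l.

Definition in_ran_M (kap : L -> R) (c : L -> R) : Prop :=
  l2 c /\ l2 (Mplus kap c).

Definition Phi (phi : R -> R -> R -> R) (a : R) (kap : L -> R) (c : L -> R)
  : L -> R := fun l => phi a (kap l) (c l).

Definition in_ran_Phi (phi : R -> R -> R -> R) (a : R) (kap : L -> R)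
  (z : L -> R) : Prop :=
  exists w, l2 w /\ z = Phi phi a kap w.

End L2.

(* phi a k c stands for varphi_alpha(kappa, c) with a = alpha, k = kappa *)
Definition nonlinear_filter (R : realType) (phi : R -> R -> R -> R) : Prop :=
  forall a k : R, 0 < a -> 0 < k ->
    [/\ (forall x y, x <= y -> phi a k x <= phi a k y),
        (forall x y, `|phi a k x - phi a k y| <= `|x - y|),
        phi a k 0 = 0 &
        (forall c, (fun b => phi b k c) @ 0^'+ --> c)].

Definition assumptionB (R : realType) (phi : R -> R -> R -> R) : Prop :=
  (forall k x a b : R, 0 < k -> 0 < a -> a <= b -> `|phi b k x| <= `|phi a k x|)
  /\ (exists d e : R, 0 < d /\ 0 < e /\
       forall k a x : R, 0 < k -> 0 < a -> `|x| <= d * a / k ->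
         `|phi a k x| <= e * k / Num.sqrt a * `|x|).

(* Main.v *)
Require Import Defs.
From HB Require Import structures.
From mathcomp Require Import all_boot all_order all_algebra.
From mathcomp Require Import all_classical all_reals all_analysis.
From mathcomp Require Import ring lra.
Import Order.TTheory GRing.Theory Num.Theory.
Import numFieldNormedType.Exports.
Local Open Scope classical_set_scope.
Local Open Scope ring_scope.

Lemma maxpn (R : realType) (x : R) : Num.max x 0 + Num.max (-x) 0 = `|x| /\ Num.max x 0 - Num.max (-x) 0 = x.
Proof.
rewrite !maxr_absE !subr0 !addr0 normrN; by split; field.
Qed.

Section ES.
Variables (R : realType) (L : countType).

Definition es (A : set L) (g : L -> R) : \bar R := (\esum_(i in A) (g i)%:E)%E.

Lemma es_ge0 A g : (forall i, 0 <= g i) -> (0 <= es A g)%E.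
Proof. by move=> g0; apply: esum_ge0 => i _; rewrite lee_fin. Qed.

Lemma es_pt A g l : A l -> (forall i, 0 <= g i) -> ((g l)%:E <= es A g)%E.
Proof.
move=> Al g0; apply: esum_ge; exists [set l].
  by split; [exact: finite_set1| move=> i ->].
by rewrite fsbig_set1.
Qed.

Lemma es_le A g1 g2 : (forall i, g1 i <= g2 i) -> (es A g1 <= es A g2)%E.
Proof. by move=> h; apply: le_esum => i _; rewrite lee_fin. Qed.

Lemma esD A g1 g2 : (forall i, 0 <= g1 i) -> (forall i, 0 <= g2 i) ->
  es A (fun i => g1 i + g2 i) = (es A g1 + es A g2)%E.
Proof.
move=> h1 h2; rewrite /es -esumD; last 2 first.
- by move=> i _; rewrite lee_fin.
- by move=> i _; rewrite lee_fin.
by apply: eq_esum => i _.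
Qed.

Lemma esZ A (c : R) (g : L -> R) : 0 <= c -> (forall i, 0 <= g i) ->
  (es A (fun i => (c * g i)%R) <= c%:E * es A g)%E.
Proof.
move=> c0 g0; apply: ge_ereal_sup => _ [X [finX XA] <-] /=.
have -> : (\sum_(i \in X) ((c * g i)%R)%:E = \sum_(i \in X) (c%:E * (g i)%:E))%E.
  by apply: eq_fsbigr => i _; rewrite EFinM.
rewrite -ge0_mule_fsumr; last by move=> i; rewrite lee_fin.
apply: lee_wpmul2l; first by rewrite lee_fin.
by apply: ereal_sup_ubound; exists X.
Qed.

Lemma es_split g (F : set L) : finite_set F -> (forall i, 0 <= g i) ->
  es setT g = ((\sum_(i \in F) g i)%:E + es (~` F) g)%E.
Proof.
move=> finF g0; rewrite /es (esumID F); last by move=> i _; rewrite lee_fin.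
rewrite !setTI esum_fset //; last by move=> i _; rewrite lee_fin.
by rewrite fsumEFin.
Qed.

Lemma es_sub A g : (forall i, 0 <= g i) -> (es A g <= es setT g)%E.
Proof.
move=> g0; rewrite /es (esumID A setT); last by move=> i _; rewrite lee_fin.
rewrite setTI leeDl //; apply: esum_ge0 => i _; rewrite lee_fin //.
Qed.


Lemma es_fin A g : (forall i, 0 <= g i) -> (es A g < +oo)%E ->
  es A g = (fine (es A g))%:E.
Proof.
move=> g0 h; rewrite fineK //; rewrite ge0_fin_numE //; exact: es_ge0.
Qed.

Lemma fine_es_ge0 A g : (forall i, 0 <= g i) -> 0 <= fine (es A g).
Proof. by move=> g0; apply: fine_ge0; apply: es_ge0. Qed.

Lemma fsumB (F : set L) (a b : L -> R) : finite_set F ->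
  \sum_(i \in F) a i - \sum_(i \in F) b i = \sum_(i \in F) (a i - b i).
Proof. by move=> finF; rewrite !fsbig_finite //= sumrB. Qed.

Definition S (f : L -> R) : R :=
  fine (\esum_(i in [set: L]) ((fun j => (f j)%:E)^\+ i))%E -
  fine (\esum_(i in [set: L]) ((fun j => (f j)%:E)^\- i))%E.

Lemma S_es (f : L -> R) : S f = fine (es setT (fun j => Num.max (f j) 0)) -
  fine (es setT (fun j => Num.max (- f j) 0)).
Proof.
rewrite /S /es; congr (fine _ - fine _); apply: eq_esum => i _.
  by rewrite funeposE EFin_max.
by rewrite funenegE EFin_max EFinN.
Qed.

Lemma S_tail (f : L -> R) (F : set L) : finite_set F ->
  (es setT (fun j => `|f j|%R) < +oo)%E ->
  `| S f - \sum_(i \in F) f i | <= fine (es (~` F) (fun j => `|f j|)).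
Proof.
move=> finF hf.
set p := fun j => Num.max (f j) 0.
set n := fun j => Num.max (- f j) 0.
have p0 : forall i, 0 <= p i by move=> i; rewrite /p le_max lexx orbT.
have n0 : forall i, 0 <= n i by move=> i; rewrite /n le_max lexx orbT.
have pn : forall i, p i + n i = `|f i| by move=> i; have [h1 h2] := @maxpn R (f i); exact: h1.
have pmn : forall i, p i - n i = f i by move=> i; have [h1 h2] := @maxpn R (f i); exact: h2.
have pa : forall i, p i <= `|f i| by move=> i; rewrite -pn lerDl.
have na : forall i, n i <= `|f i| by move=> i; rewrite -pn lerDr.
have hp : (es setT p < +oo)%E by apply: le_lt_trans hf; exact: es_le.
have hn : (es setT n < +oo)%E by apply: le_lt_trans hf; exact: es_le.
have hp2 : (es (~` F) p < +oo)%E by apply: le_lt_trans hp; exact: es_sub.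
have hn2 : (es (~` F) n < +oo)%E by apply: le_lt_trans hn; exact: es_sub.
rewrite S_es -/p -/n.
rewrite (es_split p F finF p0) (es_split n F finF n0).
rewrite (es_fin (~` F) p p0 hp2) (es_fin (~` F) n n0 hn2) -!EFinD /=.
have -> : es (~` F) (fun j => `|f j|) = es (~` F) (fun j => p j + n j).
  by rewrite /es; apply: eq_esum => i _; rewrite pn.
rewrite esD // (es_fin (~` F) p p0 hp2) (es_fin (~` F) n n0 hn2) -EFinD /=.
have -> : \sum_(i \in F) f i = \sum_(i \in F) p i - \sum_(i \in F) n i.
  by rewrite fsumB //; apply: eq_fsbigr => i _; rewrite pmn.
have a0 := fine_es_ge0 (~` F) p p0.
have b0 := fine_es_ge0 (~` F) n n0.
set P := fine _; set N := fine _.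
set sp := \sum_(i \in F) p i; set sn := \sum_(i \in F) n i.
have -> : sp + P - (sn + N) - (sp - sn) = P - N by ring.
by rewrite (le_trans (ler_normB _ _)) // !ger0_norm.
Qed.


Lemma amgm (t a b : R) : 0 < t -> `|a * b| <= t * a ^+ 2 + b ^+ 2 / t.
Proof.
move=> t0.
rewrite normrM -[a ^+ 2]real_normK ?num_real // -[b ^+ 2]real_normK ?num_real //.
set x := `|a|; set y := `|b|.
have x0 : 0 <= x by apply: normr_ge0.
have y0 : 0 <= y by apply: normr_ge0.
have ts : t * t^-1 = 1 by rewrite divff // gt_eqF.
have s0 : 0 <= t^-1 by rewrite invr_ge0 ltW.
have h : 0 <= (t * x - y) ^+ 2 * t^-1 by rewrite mulr_ge0 // sqr_ge0.
have e : (t * x - y) ^+ 2 * t^-1 = t * x ^+ 2 + y ^+ 2 / t - 2 * (x * y).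
  by field; rewrite gt_eqF.
have xy : 0 <= x * y by rewrite mulr_ge0.
lra.
Qed.

Lemma fine_le_r (x : \bar R) (r : R) : (0 <= x)%E -> (x <= r%:E)%E -> fine x <= r.
Proof.
move=> x0 xr; have xf : x \is a fin_num.
  by rewrite ge0_fin_numE // (le_lt_trans xr) // ltry.
by rewrite -lee_fin fineK.
Qed.

Lemma tail_bound (a y : L -> R) (A : set L) (t B T : R) : 0 < t ->
  (es setT (fun l => (a l ^+ 2)%R) <= B%:E)%E ->
  (es A (fun l => (y l ^+ 2)%R) <= T%:E)%E ->
  (es A (fun l => `|a l * y l|%R) <= (t * B + T / t)%:E)%E.
Proof.
move=> t0 hB hT.
have sq0 : forall (g : L -> R) i, 0 <= g i ^+ 2 by move=> g i; apply: sqr_ge0.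
apply: (@le_trans _ _ (es A (fun l => t * a l ^+ 2 + t^-1 * y l ^+ 2))).
  by apply: es_le => i; rewrite (mulrC t^-1); apply: amgm.
rewrite esD; last 2 first.
- by move=> i; rewrite mulr_ge0 // ltW.
- by move=> i; rewrite mulr_ge0 // invr_ge0 ltW.
rewrite EFinD; apply: leeD.
  apply: (le_trans (esZ A t (fun l => a l ^+ 2) (ltW t0) (sq0 a))).
  rewrite EFinM; apply: lee_wpmul2l; first by rewrite lee_fin ltW.
  apply: le_trans hB; apply: es_sub => i; exact: sq0.
have ti : 0 <= t^-1 by rewrite invr_ge0 ltW.
apply: (le_trans (esZ A t^-1 (fun l => y l ^+ 2) ti (sq0 y))).
by rewrite mulrC EFinM; apply: lee_wpmul2l; rewrite ?lee_fin.
Qed.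

Lemma fsum_cvg (F : set L) (a : nat -> L -> R) (b : L -> R) : finite_set F ->
  (forall l, a ^~ l @ \oo --> b l) ->
  (fun k => \sum_(i \in F) a k i) @ \oo --> \sum_(i \in F) b i.
Proof.
move=> finF h.
have e : forall g : L -> R, \sum_(i \in F) g i = \sum_(i <- (finmap.enum_fset (fset_set F))) g i.
  by move=> g; rewrite fsbig_finite.
rewrite e; under eq_fun do rewrite e.
elim: (finmap.enum_fset (fset_set F)) => [|j s IH].
  rewrite big_nil.
  have -> : (fun k => \sum_(i <- [::]) a k i) = (fun k => 0) by apply: funext => k; rewrite big_nil.
  exact: cvg_cst.
rewrite big_cons.
have -> : (fun k => \sum_(i <- j :: s) a k i) = (fun k => a k j + \sum_(i <- s) a k i).
  by apply: funext => k; rewrite big_cons.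
exact: cvgD.
Qed.


Lemma weak_bdd (u : nat -> L -> R) (x y : L -> R) (B : R) : 0 < B ->
  (forall k, (es setT (fun l => (u k l ^+ 2)%R) <= B%:E)%E) ->
  (es setT (fun l => (x l ^+ 2)%R) <= B%:E)%E ->
  (forall l, u ^~ l @ \oo --> x l) ->
  (es setT (fun l => (y l ^+ 2)%R) < +oo)%E ->
  (fun k => S (fun j => u k j * y j)) @ \oo --> S (fun j => x j * y j).
Proof.
move=> B0 hu hx hpw hy.
have y0 : forall i, 0 <= y i ^+ 2 by move=> i; exact: sqr_ge0.
have ab0 : forall (a : L -> R) i, 0 <= `|a i * y i| by move=> a i; exact: normr_ge0.
set Ey := es setT (fun l => (y l ^+ 2)%R).
have EyE : Ey = (fine Ey)%:E by apply: es_fin.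
set s := fine Ey.
have fin_abs : forall a : L -> R, (es setT (fun l => (a l ^+ 2)%R) <= B%:E)%E ->
    (es setT (fun l => `|a l * y l|%R) < +oo)%E.
  move=> a ha; apply: (@le_lt_trans _ _ ((1 * B + s / 1)%:E)); last exact: ltry.
  by apply: tail_bound => //; rewrite -EyE.
apply/cvgrPdist_lt => eps eps0.
set eta := eps ^+ 2 / (64 * B).
have eta0 : 0 < eta by rewrite /eta divr_gt0 // ?exprn_gt0 // mulr_gt0.
have : ((s - eta)%:E < Ey)%E by rewrite EyE lte_fin -/s; lra.
rewrite /Ey /es /esum => /ereal_sup_gt [v [X [finX _] <-]].
rewrite fsumEFin // lte_fin => hv.
set T := fine (es (~` X) (fun l => (y l ^+ 2)%R)).
have hXf : (es (~` X) (fun l => (y l ^+ 2)%R) < +oo)%E.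
  by apply: le_lt_trans hy; apply: es_sub.
have sT : s = \sum_(i \in X) y i ^+ 2 + T.
  rewrite /s /Ey (es_split _ X finX y0) (es_fin (~` X) _ y0 hXf) -EFinD //.
have hT : (es (~` X) (fun l => (y l ^+ 2)%R) <= T%:E)%E by rewrite -es_fin.
have Teta : T <= eta by lra.
set t := eps / (8 * B).
have t0 : 0 < t by rewrite /t divr_gt0 // mulr_gt0.
have tB : t * B + T / t <= eps / 4.
  have e1 : t * B = eps / 8 by rewrite /t; field; rewrite gt_eqF.
  have e2 : eta = eps / 8 * t by rewrite /eta /t; field; rewrite gt_eqF.
  have : T / t <= eps / 8 by rewrite ler_pdivrMr // -e2.
  lra.
have tail : forall a : L -> R, (es setT (fun l => (a l ^+ 2)%R) <= B%:E)%E ->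
    `| S (fun j => a j * y j) - \sum_(i \in X) (a i * y i) | <= eps / 4.
  move=> a ha; apply: le_trans (S_tail (fun j => a j * y j) X finX (fin_abs a ha)) _.
  apply: fine_le_r; first exact: es_ge0.
  apply: le_trans (tail_bound _ _ _ _ _ _ t0 ha hT) _; by rewrite lee_fin.
have hpw' : forall l, (fun k => u k l * y l) @ \oo --> x l * y l.
  by move=> l; apply: cvgMr_tmp; exact: hpw.
have := fsum_cvg _ _ _ finX hpw'.
move/cvgrPdist_lt => /(_ (eps / 2)) hn.
have e2 : 0 < eps / 2 by rewrite divr_gt0.
apply: filterS (hn e2) => k hk.
have h1 := tail (u k) (hu k); have h2 := tail x hx.
move: h1 h2 hk; rewrite !ler_norml !ltr_norml => /andP[h1 h1'] /andP[h2 h2'] /andP[h3 h3'].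
by apply/andP; split; lra.
Qed.

End ES.
Arguments es {R L}.
Arguments S {R L}.
Arguments es_fin {R L}.
Arguments es_pt {R L}.
Arguments esZ {R L}.
Arguments es_le {R L}.
Arguments esD {R L}.
Arguments fine_es_ge0 {R L}.
Arguments weak_bdd {R L u x y B}.


Lemma ptbound (R : realType) (a kk d e C zz w p : R) :
 0 < a -> 0 < kk -> 0 < d -> 0 < e -> 0 < C ->
 `|p| <= `|w| ->
 (`|w| <= d * a / kk -> `|p| <= e * kk / Num.sqrt a * `|w|) ->
 (zz - w) ^+ 2 <= C * a ->
 (p / kk) ^+ 2 <= 4 * (zz / kk) ^+ 2 + (4 * e ^+ 2 + 16 * C / d ^+ 2) / a * (zz - w) ^+ 2.
Proof.
move=> a0 k0 d0 e0 C0 hpw hB hC.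
have hW : `|w| <= `|zz| + `|zz - w|.
  have := ler_normB zz (zz - w).
  by have -> : zz - (zz - w) = w by ring.
rewrite -(real_normK (num_real (zz - w))) in hC.
set P := `|p| in hpw hB *; set Wa := `|w| in hpw hB hW *.
set Za := `|zz| in hW *; set Ea := `|zz - w| in hW hC *.
have P0 : 0 <= P by apply: normr_ge0.
have W0 : 0 <= Wa by apply: normr_ge0.
have Z0 : 0 <= Za by apply: normr_ge0.
have E0 : 0 <= Ea by apply: normr_ge0.
set K := 16 * C / d ^+ 2.
suff H : P ^+ 2 * a <= 4 * Za ^+ 2 * a + (4 * e ^+ 2 + K) * kk ^+ 2 * Ea ^+ 2.
  rewrite -subr_ge0.
  have -> : 4 * (zz / kk) ^+ 2 + (4 * e ^+ 2 + K) / a * (zz - w) ^+ 2 - (p / kk) ^+ 2 =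
    (4 * Za ^+ 2 * a + (4 * e ^+ 2 + K) * kk ^+ 2 * Ea ^+ 2 - P ^+ 2 * a) / (a * kk ^+ 2).
    rewrite /Za /P /Ea !real_normK ?num_real //.
    by field; rewrite ?gt_eqF.
  by rewrite divr_ge0 ?subr_ge0 // mulr_ge0 ?sqr_ge0 // ltW.
have K0 : 0 <= K by rewrite /K divr_ge0 ?mulr_ge0 ?sqr_ge0 // ltW.
have s1 : 0 <= 4 * e ^+ 2 + K by have := sqr_ge0 e; lra.
have kE := mulr_ge0 (mulr_ge0 s1 (sqr_ge0 kk)) (sqr_ge0 Ea).
case: (leP Ea Za) => hEZ.
  have : P <= 2 * Za by lra.
  move=> h; have hP : P ^+ 2 <= 4 * Za ^+ 2 by nra.
  have := ler_wpM2r (ltW a0) hP; lra.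
case: (leP (Wa * kk) (d * a)) => hWk.
  have hWk' : Wa <= d * a / kk by rewrite ler_pdivlMr.
  have h := hB hWk'.
  set r := Num.sqrt a.
  have r0 : 0 < r by rewrite sqrtr_gt0.
  have ra : r ^+ 2 = a by rewrite sqr_sqrtr // ltW.
  have hr : P * r <= e * kk * Wa.
    have -> : e * kk * Wa = (e * kk / r * Wa) * r by field; rewrite gt_eqF.
    by apply: ler_wpM2r; [exact: ltW | exact: h].
  have hW2 : Wa <= 2 * Ea by lra.
  have : e * kk * Wa <= e * kk * (2 * Ea).
    by apply: ler_wpM2l => //; apply: mulr_ge0; apply: ltW.
  move=> hh; have hr2 : P * r <= 2 * e * kk * Ea by lra.
  have hr3 : (P * r) ^+ 2 <= (2 * e * kk * Ea) ^+ 2.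
    have Pr0 : 0 <= P * r by rewrite mulr_ge0 // ltW.
    nra.
  have : P ^+ 2 * a <= 4 * e ^+ 2 * kk ^+ 2 * Ea ^+ 2.
    rewrite -ra.
    have e1 : P ^+ 2 * r ^+ 2 = (P * r) ^+ 2 by ring.
    have e2 : 4 * e ^+ 2 * kk ^+ 2 * Ea ^+ 2 = (2 * e * kk * Ea) ^+ 2 by ring.
    by rewrite e1 e2.
  have := mulr_ge0 (mulr_ge0 K0 (sqr_ge0 kk)) (sqr_ge0 Ea).
  have q4 : (0 : R) <= 4 by [].
  have := mulr_ge0 (mulr_ge0 q4 (sqr_ge0 Za)) (ltW a0).
  move=> q1 q2 q3; lra.
have hW2 : Wa <= 2 * Ea by lra.
have : Wa * kk <= 2 * Ea * kk by apply: ler_wpM2r; [exact: ltW | exact: hW2].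
move=> t0; have h1 : d * a < 2 * kk * Ea by lra.
have da0 : 0 < d * a by rewrite mulr_gt0.
have h2 : (d * a) ^+ 2 < (2 * kk * Ea) ^+ 2 by nra.
have h3 : d ^+ 2 * a <= 4 * kk ^+ 2 * C.
  have t1 : 4 * kk ^+ 2 * Ea ^+ 2 <= 4 * kk ^+ 2 * (C * a).
    apply: ler_wpM2l; last exact: hC.
    by apply: mulr_ge0 => //; exact: sqr_ge0.
  have t2 : (d ^+ 2 * a) * a < (4 * kk ^+ 2 * C) * a.
    have e1 : (d * a) ^+ 2 = (d ^+ 2 * a) * a by ring.
    have e2 : (2 * kk * Ea) ^+ 2 = 4 * kk ^+ 2 * Ea ^+ 2 by ring.
    have e3 : 4 * kk ^+ 2 * (C * a) = (4 * kk ^+ 2 * C) * a by ring.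
    rewrite -e1 -e3; rewrite e2 in h2; exact: lt_le_trans h2 t1.
  by rewrite -(ler_pM2r a0); exact: ltW t2.
have h4 : 4 * a * Ea ^+ 2 <= K * kk ^+ 2 * Ea ^+ 2.
  rewrite -subr_ge0.
  have -> : K * kk ^+ 2 * Ea ^+ 2 - 4 * a * Ea ^+ 2 =
     4 * Ea ^+ 2 * (4 * kk ^+ 2 * C - d ^+ 2 * a) / d ^+ 2.
    by rewrite /K; field; rewrite gt_eqF // exprn_gt0.
  apply: divr_ge0; last exact: sqr_ge0.
  apply: mulr_ge0; last by rewrite subr_ge0.
  by apply: mulr_ge0 => //; exact: sqr_ge0.
have hP2 : P ^+ 2 <= 4 * Ea ^+ 2.
  have : P <= 2 * Ea by lra.
  nra.
have := ler_wpM2r (ltW a0) hP2.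
have q4 : (0 : R) <= 4 by [].
have := mulr_ge0 (mulr_ge0 (mulr_ge0 q4 (sqr_ge0 e)) (sqr_ge0 kk)) (sqr_ge0 Ea).
have := mulr_ge0 (mulr_ge0 q4 (sqr_ge0 Za)) (ltW a0).
move=> q1 q2 q3; lra.
Qed.

Lemma right_seq (R : realType) (alpha : nat -> R) : (forall k, 0 < alpha k) ->
  alpha @ \oo --> 0 -> alpha @ \oo --> 0^'+.
Proof.
move=> apos acvg P /= hP.
have h := acvg _ hP.
apply: (@filterS _ \oo _ (alpha @^-1` (fun t => 0 < t -> P t)) (alpha @^-1` P) _ h) => k /= hk; exact: hk (apos k).
Qed.

Lemma comp_right (R : realType) (alpha : nat -> R) (g : R -> R) (c : R) : (forall k, 0 < alpha k) ->
  alpha @ \oo --> 0 -> g @ 0^'+ --> c -> (fun k => g (alpha k)) @ \oo --> c.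
Proof.
move=> apos acvg hg.
apply: cvg_comp hg. exact: right_seq.
Qed.

Lemma sq_le (R : realType) (p w : R) : `|p| <= `|w| -> p ^+ 2 <= w ^+ 2.
Proof.
move=> h; rewrite -(real_normK (num_real p)) -(real_normK (num_real w)).
have := normr_ge0 p; nra.
Qed.

Lemma abs_le_of_sq (R : realType) (w dl : R) : 0 < dl -> w ^+ 2 <= dl ^+ 2 -> `|w| <= dl.
Proof.
move=> d0; rewrite -(real_normK (num_real w)) => h.
have := normr_ge0 w; nra.
Qed.

Theorem proposition4p9 (R : realType) (L : countType) (kap : L -> R)
  (phi : R -> R -> R -> R) (z : L -> R) (at_ : R)
  (delta alpha : nat -> R) (C : R) (zk : nat -> L -> R) :
  (forall l, 0 < kap l) -> (exists M : R, forall l, kap l <= M) ->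
  nonlinear_filter phi -> assumptionB phi ->
  0 < at_ -> in_ran_M kap z -> in_ran_Phi phi at_ kap z ->
  (forall k, 0 < delta k) -> (forall k, 0 < alpha k) ->
  delta @ \oo --> 0 -> alpha @ \oo --> 0 ->
  0 < C -> (forall k, delta k ^+ 2 <= C * alpha k) ->
  (forall k, l2 (zk k)) ->
  (forall k, l2norm (fun l => z l - zk k l) <= delta k) ->
  (forall k, in_ran_M kap (Phi phi (alpha k) kap (zk k))) /\
  l2_weak_cvg (fun k => Mplus kap (Phi phi (alpha k) kap (zk k))) (Mplus kap z).
Proof.
move=> kap0 _ hfilt [_ [d [e [d0 [e0 hB2]]]]] at0 [hz2 hzM] _ dpos apos dcvg acvg
  C0 hdC hzk hnorm.
have Lip : forall a kk c, 0 < a -> 0 < kk -> `|phi a kk c| <= `|c|.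
  move=> a kk c a0 k0; have [_ hL h0 _] := hfilt a kk a0 k0.
  by have := hL c 0; rewrite h0 !subr0.
have sq0 : forall (f : L -> R) i, 0 <= f i ^+ 2 by move=> f i; exact: sqr_ge0.
have hz2' : (es setT (fun l => (z l ^+ 2)%R) < +oo)%E := hz2.
have Eeps : forall k, (es setT (fun l => ((z l - zk k l) ^+ 2)%R) <= (delta k ^+ 2)%:E)%E.
  move=> k.
  have hzk' : (es setT (fun l => (zk k l ^+ 2)%R) < +oo)%E := hzk k.
  have fin : (es setT (fun l => ((z l - zk k l) ^+ 2)%R) < +oo)%E.
    apply: (@le_lt_trans _ _ (es setT (fun l => (2 * z l ^+ 2)%R + (2 * zk k l ^+ 2)%R))).
      by apply: es_le => l; have := sqr_ge0 (z l + zk k l); nra.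
    rewrite esD; last 2 first.
    - by move=> i; rewrite mulr_ge0.
    - by move=> i; rewrite mulr_ge0.
    apply: lte_add_pinfty.
      have := esZ setT 2 (fun l => z l ^+ 2) (ler0n _ 2) (sq0 z).
      rewrite (es_fin _ _ (sq0 z) hz2') -EFinM => h; exact: le_lt_trans h (ltry _).
    have := esZ setT 2 (fun l => zk k l ^+ 2) (ler0n _ 2) (sq0 (zk k)).
    rewrite (es_fin _ _ (sq0 (zk k)) hzk') -EFinM => h; exact: le_lt_trans h (ltry _).
  rewrite (es_fin _ _ (sq0 (fun l => z l - zk k l)) fin) lee_fin.
  have := hnorm k; rewrite /l2norm -/(es setT (fun l => ((z l - zk k l) ^+ 2)%R)).
  set v := fine _ => hv.
  have v0 : 0 <= v by apply: fine_es_ge0 => i; exact: sqr_ge0.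
  have sv0 := sqrtr_ge0 v.
  rewrite -(sqr_sqrtr v0); nra.
have hepsd : forall k l, (z l - zk k l) ^+ 2 <= delta k ^+ 2.
  move=> k l; rewrite -lee_fin; apply: le_trans (Eeps k).
  exact: (es_pt setT (fun l => (z l - zk k l) ^+ 2) l I (sq0 (fun l => z l - zk k l))).
have ptE : forall k l, (z l - zk k l) ^+ 2 <= C * alpha k.
  by move=> k l; apply: le_trans (hepsd k l) (hdC k).
set K := 4 * e ^+ 2 + 16 * C / d ^+ 2.
have K0 : 0 <= K.
  have q1 : 0 <= 16 * C / d ^+ 2 by apply: divr_ge0; [apply: mulr_ge0 => //; exact: ltW | exact: sqr_ge0].
  have := sqr_ge0 e; rewrite /K; lra.
set x := Mplus kap z.
set u := fun k => Mplus kap (Phi phi (alpha k) kap (zk k)).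
have hPt : forall k l, u k l ^+ 2 <= 4 * x l ^+ 2 + K / alpha k * (z l - zk k l) ^+ 2.
  move=> k l; rewrite /u /x /Mplus /Phi /K.
  apply: ptbound => //.
  - exact: Lip.
  - by move=> h; apply: hB2.
have hzM' : (es setT (fun l => (x l ^+ 2)%R) < +oo)%E := hzM.
set Ex := fine (es setT (fun l => (x l ^+ 2)%R)).
have Ex0 : 0 <= Ex by apply: fine_es_ge0 => i; exact: sqr_ge0.
have ExE : es setT (fun l => (x l ^+ 2)%R) = Ex%:E by apply: es_fin.
set B := 4 * Ex + K * C + 1.
have B0 : 0 < B by rewrite /B; have := mulr_ge0 K0 (ltW C0); lra.
have hu : forall k, (es setT (fun l => (u k l ^+ 2)%R) <= B%:E)%E.
  move=> k.
  have aK : 0 <= K / alpha k by rewrite divr_ge0 // ltW.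
  apply: (le_trans (es_le setT _ _ (hPt k))).
  rewrite esD; last 2 first.
  - by move=> i; rewrite mulr_ge0 // sqr_ge0.
  - by move=> i; rewrite mulr_ge0 // sqr_ge0.
  apply: (@le_trans _ _ ((4 * Ex)%:E + (K * C)%:E)%E); last first.
    by rewrite -EFinD lee_fin /B lerDl.
  apply: leeD.
    apply: le_trans (esZ setT 4 (fun l => x l ^+ 2) (ler0n _ 4) (sq0 x)) _.
    by rewrite ExE -EFinM.
  apply: le_trans (esZ setT _ (fun l => (z l - zk k l) ^+ 2) aK (sq0 (fun l => z l - zk k l))) _.
  apply: le_trans (lee_wpmul2l _ (Eeps k)) _; first by rewrite lee_fin.
  rewrite -EFinM lee_fin mulrAC.
  have : delta k ^+ 2 / alpha k <= C by rewrite ler_pdivrMr.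
  have ha := apos k.
  move=> h; rewrite -mulrA; apply: ler_wpM2l => //.
have hxB : (es setT (fun l => (x l ^+ 2)%R) <= B%:E)%E.
  rewrite ExE lee_fin /B; have := mulr_ge0 K0 (ltW C0); lra.
have hpw : forall l, (fun k => u k l) @ \oo --> x l.
  move=> l; rewrite /u /x /Mplus /Phi.
  apply: cvgMr_tmp.
  have [_ _ _ h4] := hfilt 1 (kap l) ltr01 (kap0 l).
  have hc := comp_right _ _ _ _ apos acvg (h4 (z l)).
  apply/cvgrPdist_lt => eps eps0.
  have e2 : 0 < eps / 2 by rewrite divr_gt0.
  move/cvgrPdist_lt: hc => /(_ _ e2) h1.
  move/cvgrPdist_lt: dcvg => /(_ _ e2) h2.
  apply: filterS2 h1 h2 => k /= hk1 hk2.
  have hd : `|z l - zk k l| <= delta k by apply: abs_le_of_sq; [exact: dpos | exact: hepsd].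
  have [_ hL _ _] := hfilt (alpha k) (kap l) (apos k) (kap0 l).
  have hl := hL (z l) (zk k l).
  have hd' := hd.
  move: hk1 hk2 hd hl; rewrite sub0r normrN !ltr_norml !ler_norml.
  move=> /andP[a1 a2] /andP[b1 b2] /andP[c1 c2] /andP[d1 d2].
  by apply/andP; split; lra.
split.
  move=> k; split.
    rewrite /l2 /Phi.
    apply: le_lt_trans (hzk k).
    apply: (es_le setT (fun l => phi (alpha k) (kap l) (zk k l) ^+ 2) (fun l => zk k l ^+ 2)).
    by move=> l; apply: sq_le; apply: Lip.
  exact: le_lt_trans (hu k) (ltry _).
move=> y hy.
exact: (weak_bdd B0 hu hxB hpw hy).
Qed.
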